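(* In the model described in the context, if $(\tilde y_0^+,\tilde y_0^-)=(1,1)$ (deterministically), then $\Pr(W_2)-\Pr(W_1) = \tfrac12(G-A)$.
   Context: Model. Fix an integer $m\ge 2$, and reals $1>\rho>q>0$, $0\le\nu<\tfrac12$. A sample consists of ground-truth labels $y_0,y_1,\dots,y_m\in\{0,1\}$ and noisy labels $\tilde y_0,\dots,\tilde y_m\in\{0,1\}$. Given $y_0$, the labels $y_1,\dots,y_m$ are conditionally independent with $\Pr(y_i=1\mid y_0=1)=\rho$ and $\Pr(y_i=1\mid y_0=0)=q$ for $i\in\{1,\dots,m\}$. For $i\in\{1,\dots,m\}$, $\tilde y_i = 1-y_i$ with probability $\nu$ and $\tilde y_i=y_i$ otherwise, the flips being independent of each other and of everything else. A positive sample has $y_0=1$ and a negative sample has $y_0=0$; we draw one positive sample (superscript $+$) and one negative sample (superscript $-$) independently. The pair $(\tilde y_0^+,\tilde y_0^-)\in\{0,1\}^2$ has an arbitrary distribution, independent of all $y_i^\pm,\tilde y_i^\pm$ with $i\ge1$. Fix $\delta>0$. For each sample set $\bar s_{0,i} := \max(\tilde y_0,\tilde y_i)+\delta\min(\tilde y_0,\tilde y_i)$ for $i=1,\dots,m$, and let $\bar r_1\ge \bar r_2$ be the largest and second largest elements of $\{\bar s_{0,1},\dots,\bar s_{0,m}\}$ (as a multiset). Notation: $\rho' := (1-\nu)\rho+\nu(1-\rho)$, $q':=(1-\nu)q+\nu(1-q)$, $a:=1-\rho'$, $\gamma := \frac{1-q'}{1-\rho'}$, $A := m(1-a)a^{m-1}$,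 $G := m(1-\gamma a)(\gamma a)^{m-1}$. For $k\in\{1,2\}$, $\Pr(W_k) := \Pr(\bar r_k^+>\bar r_k^-) + \tfrac12\Pr(\bar r_k^+=\bar r_k^-)$. *)

(* Defs.v *)
From mathcomp Require Import all_boot all_order all_algebra.
Set Implicit Arguments. Unset Strict Implicit. Unset Printing Implicit Defensive.
Import Order.TTheory GRing.Theory Num.Theory.
Local Open Scope ring_scope.

Section Model.
Variable R : realFieldType.

Definition b2r (b : bool) : R := if b then 1 else 0.

Definition bern (p : R) (b : bool) : R := if b then p else 1 - p.

Definition sbar (delta : R) (t0 ti : bool) : R :=
  Num.max (b2r t0) (b2r ti) + delta * Num.min (b2r t0) (b2r ti).

Variable m : nat.

(* outcome of one sample: (ground-truth labels y_1..y_m, flip indicators) *)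
Definition outcome := ({ffun 'I_m -> bool} * {ffun 'I_m -> bool})%type.

Definition sample_weight (p nu : R) (o : outcome) : R :=
  \prod_(i < m) (bern p (o.1 i) * bern nu (o.2 i)).

Definition noisy (o : outcome) : {ffun 'I_m -> bool} :=
  [ffun i => o.1 i (+) o.2 i].

Definition scores (delta : R) (t0 : bool) (yt : {ffun 'I_m -> bool}) : seq R :=
  [seq sbar delta t0 (yt i) | i <- enum 'I_m].

(* k-th largest element (k = 1 : largest, k = 2 : second largest) *)
Definition rank_k (k : nat) (s : seq R) : R :=
  nth 0 (sort (fun x y => y <= x) s) k.-1.

Definition winval (x y : R) : R :=
  if y < x then 1 else if x == y then 1 / 2 else 0.

(* Pr(W_k) = Pr(r_k^+ > r_k^-) + 1/2 Pr(r_k^+ = r_k^-), where p0 is the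
   distribution of (tilde y_0^+, tilde y_0^-), independent of the rest;
   the positive sample has Pr(y_i=1)=rho, the negative one Pr(y_i=1)=q. *)
Definition PrW (rho q nu delta : R) (p0 : bool * bool -> R) (k : nat) : R :=
  \sum_(t0 : bool * bool) \sum_(op : outcome) \sum_(on : outcome)
    p0 t0 * sample_weight rho nu op * sample_weight q nu on *
    winval (rank_k k (scores delta t0.1 (noisy op)))
           (rank_k k (scores delta t0.2 (noisy on))).

Definition rho' (rho nu : R) : R := (1 - nu) * rho + nu * (1 - rho).
Definition a_par (rho nu : R) : R := 1 - rho' rho nu.
Definition gamma_par (rho q nu : R) : R := (1 - rho' q nu) / (1 - rho' rho nu).
Definition A_par (rho nu : R) : R :=
  m%:R * (1 - a_par rho nu) * a_par rho nu ^+ m.-1.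
Definition G_par (rho q nu : R) : R :=
  m%:R * (1 - gamma_par rho q nu * a_par rho nu)
       * (gamma_par rho q nu * a_par rho nu) ^+ m.-1.

End Model.

(* Main.v *)
Require Import Defs.
From mathcomp Require Import all_boot all_order all_algebra.
From mathcomp Require Import zify ring lra.
Import Order.TTheory GRing.Theory Num.Theory.
Local Open Scope ring_scope.

Lemma bool_perm (L : seq bool) :
  perm_eq L (nseq (count id L) true ++ nseq (count negb L) false).
Proof.
elim: L => [|b L IH] //=; case: b => /=; rewrite ?add1n ?add0n /=.
  by rewrite perm_cons.
rewrite perm_sym -cat1s perm_catCA /= perm_cons perm_sym //.
Qed.

Lemma sorted_nseq2 (T : Type) (e : rel T) x y c d :
  e x x -> e y y -> e x y -> sorted e (nseq c x ++ nseq d y).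
Proof.
move=> exx eyy exy.
have Hy : forall n, path e y (nseq n y) by elim=> //= n ->; rewrite eyy.
elim: c => [|c IH] /=; first by case: d => //= d; apply: Hy.
case: c IH => [|c] /= IH; last by rewrite exx.
by case: d {IH} => //= d; rewrite exy Hy.
Qed.

Section S.
Variable R : realFieldType.
Variable m : nat.

Definition cnt (z : {ffun 'I_m -> bool}) : nat := count id [seq z i | i <- enum 'I_m].

Lemma rankE (delta : R) k (yt : {ffun 'I_m -> bool}) :
  (0 < k)%N -> (k <= m)%N -> 0 < delta ->
  rank_k k (scores delta true yt) = if (k <= cnt yt)%N then 1 + delta else 1.
Proof.
move=> k0 km dp.
set L := [seq yt i | i <- enum 'I_m].
set g := fun b : bool => if b then 1 + delta else (1 : R).
have sc : scores delta true yt = map g L.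
  rewrite /scores /L -map_comp; apply: eq_map => i /=.
  rewrite /sbar /b2r /g; case: (yt i).
    by rewrite maxxx minxx mulr1.
  by rewrite max_l ?ler01 // min_r ?ler01 // mulr0 addr0.
have Xge : 1 <= 1 + delta by rewrite lerDl ltW.
have srt : sort (fun x y : R => y <= x) (map g L) =
   nseq (cnt yt) (1 + delta) ++ nseq (count negb L) 1.
  apply: (@sorted_eq _ (fun x y : R => y <= x)).
  - by move=> x y z h1 h2; apply: le_trans h2 h1.
  - move=> x y /andP [h1 h2]; apply/eqP; by rewrite eq_le h1 h2.
  - by apply: sort_sorted => x y; apply: le_total.
  - by apply: sorted_nseq2 => //=.
  - rewrite perm_sort.
    have := perm_map g (bool_perm L).
    by rewrite map_cat !map_nseq.
have sz : (cnt yt + count negb L)%N = m.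
  by rewrite /cnt -/L count_predC size_map size_enum_ord.
rewrite /rank_k sc srt nth_cat size_nseq.
case: k k0 km => // k _ km /=.
case: ltnP => h.
  by rewrite nth_nseq h.
rewrite nth_nseq ifT; last by lia.
done.
Qed.

Lemma Esw (p nu : R) (F : 'I_m -> bool -> R) :
  \sum_(o : outcome m) sample_weight p nu o * \prod_(i < m) F i (noisy o i) =
  \prod_(i < m) (\sum_(a : bool) \sum_(b : bool) bern p a * bern nu b * F i (a (+) b)).
Proof.
rewrite bigA_distr_bigA /=.
under eq_bigr do rewrite bigA_distr_bigA.
rewrite pair_big /=.
apply: eq_big => // -[f1 f2] _ /=.
rewrite /sample_weight -big_split /=; apply: eq_bigr => i _.
by rewrite ffunE.
Qed.

Lemma cntE (z : {ffun 'I_m -> bool}) : cnt z = #|[pred i | z i]|.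
Proof.
rewrite /cnt cardE count_map /enum_mem size_filter /=.
by rewrite (@eq_filter _ _ predT) ?filter_predT.
Qed.

Lemma cnt1 (z : {ffun 'I_m -> bool}) :
  (if (1 <= cnt z)%N then 1 else 0) - (if (2 <= cnt z)%N then 1 else 0)
  = \sum_(j < m) \prod_(i < m) (if i == j then b2r R (z i) else 1 - b2r R (z i)) :> R.
Proof.
rewrite cntE.
case: (pickP [pred i | z i]) => [j0 zj0 | hz].
  rewrite (bigD1 j0) //= [X in _ = _ + X]big1 ?addr0; last first.
    move=> j jj0; rewrite (bigD1 j0) //= eq_sym (negbTE jj0).
    by rewrite /= in zj0; rewrite zj0 /b2r subrr mul0r.
  rewrite (bigD1 j0) //= eqxx.
  rewrite /= in zj0; rewrite zj0 /b2r mul1r.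
  rewrite (cardD1 j0) inE /= zj0 add1n.
  case: (pickP [pred i | (i != j0) && z i]) => [i1 /andP [i1j0 zi1] | hn].
    rewrite (bigD1 i1) //= (negbTE i1j0) zi1 subrr mul0r.
    rewrite (cardD1 i1) !inE i1j0 zi1 /=.
    by rewrite subrr.
  rewrite big1; last first.
    move=> i ij0; rewrite (negbTE ij0).
    by have := hn i; rewrite /= ij0 /= => ->; rewrite subr0.
  have c0 : #|[predD1 [pred i | z i] & j0]| = 0%N.
    apply: eq_card0 => i; rewrite !inE; have := hn i; rewrite /= => ->.
    by [].
  by rewrite c0 /= subr0.
have c0 : #|[pred i | z i]| = 0%N.
  by apply: eq_card0 => i; rewrite !inE; have := hz i; rewrite /= => ->.
rewrite c0 /= subrr big1 // => j _.
rewrite (bigD1 j) //= eqxx.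
by have := hz j; rewrite /= => ->; rewrite mul0r.
Qed.

Lemma Eprod (T : finType) (w1 w2 f g : T -> R) :
  \sum_x w1 x = 1 -> \sum_x w2 x = 1 ->
  \sum_x \sum_y w1 x * w2 y * (1/2 + f x / 2 - g y / 2)
  = 1/2 + (\sum_x w1 x * f x) / 2 - (\sum_y w2 y * g y) / 2.
Proof.
move=> H1 H2.
have e : forall x y, w1 x * w2 y * (1/2 + f x/2 - g y/2) =
   (w1 x * (1/2 + f x /2)) * w2 y - (w1 x / 2) * (w2 y * g y).
  by move=> x y; ring.
under eq_bigr do under eq_bigr do rewrite e.
under eq_bigr do rewrite sumrB -!mulr_sumr H2 mulr1.
rewrite sumrB -mulr_suml.
have -> : \sum_x w1 x * (1 / 2 + f x / 2) = (\sum_x w1 x) / 2 + (\sum_x w1 x * f x) / 2.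
  rewrite !mulr_suml -big_split /=; apply: eq_bigr => x _.
  by ring.
rewrite -mulr_suml H1.
by ring.
Qed.

Lemma wv (d : R) (b c : bool) : 0 < d ->
  winval (if b then 1 + d else 1) (if c then 1 + d else 1) =
  1/2 + (if b then 1 else 0)/2 - (if c then 1 else 0)/2.
Proof.
move=> dp; have h : 1 < 1 + d by rewrite ltrDl.
rewrite /winval; case: b; case: c => /=.
- by rewrite ltxx eqxx; ring.
- by rewrite h; field.
- rewrite ltNge (ltW h) /= (lt_eqF h).
  by field.
- by rewrite ltxx eqxx; field.
Qed.

Lemma Ew1 (p nu : R) : \sum_(o : outcome m) sample_weight p nu o = 1.
Proof.
have := Esw p nu (fun _ _ => 1).
under eq_bigr do rewrite big1_eq mulr1.
move=> ->; rewrite big1 // => i _.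
by rewrite !big_bool /bern /=; ring.
Qed.

Lemma Ecnt1 (p nu : R) :
  \sum_(o : outcome m) sample_weight p nu o *
    ((if (1 <= cnt (noisy o))%N then 1 else 0) - (if (2 <= cnt (noisy o))%N then 1 else 0))
  = (rho' p nu * (1 - rho' p nu) ^+ m.-1) *+ m.
Proof.
under eq_bigr do rewrite cnt1 mulr_sumr.
rewrite exchange_big /=.
rewrite -[in RHS](card_ord m) -sumr_const.
apply: eq_bigr => j _.
rewrite (Esw p nu (fun i b => if i == j then b2r R b else 1 - b2r R b)).
rewrite (bigD1 j) //= eqxx.
rewrite [X in _ * X](eq_bigr (fun=> 1 - rho' p nu)); last first.
  move=> i ij; rewrite (negbTE ij) !big_bool /bern /b2r /rho' /=; ring.
rewrite prodr_const cardC1 card_ord.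
congr (_ * _).
by rewrite !big_bool /bern /b2r /rho' /=; ring.
Qed.
End S.

Theorem lemma4 (R : realFieldType) (m : nat) (rho q nu delta : R)
  (p0 : bool * bool -> R) :
  (2 <= m)%N -> 0 < q -> q < rho -> rho < 1 -> 0 <= nu -> nu < 1 / 2 ->
  0 < delta ->
  (forall t, p0 t = if t == (true, true) then 1 else 0) ->
  PrW m rho q nu delta p0 2 - PrW m rho q nu delta p0 1
  = (G_par m rho q nu - A_par m rho nu) / 2.
Proof.
move=> hm q0 qr r1 nu0 nuh d0 Hp0.
pose B k (o : outcome m) : R := if (k <= cnt m (noisy o))%N then 1 else 0.
have PrWE : forall k, (0 < k)%N -> (k <= m)%N -> PrW m rho q nu delta p0 k =
   1/2 + (\sum_o sample_weight rho nu o * B k o)/2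
       - (\sum_o sample_weight q nu o * B k o)/2.
  move=> k k0 km.
  rewrite /PrW (bigD1 (true,true)) //= [X in _ + X]big1 ?addr0; last first.
    move=> t ht; apply: big1 => op _; apply: big1 => on _.
    by rewrite Hp0 (negbTE ht) !mul0r.
  rewrite Hp0 eqxx.
  rewrite (eq_bigr (fun op : outcome m => \sum_(on : outcome m) sample_weight rho nu op * sample_weight q nu on * (1/2 + B k op/2 - B k on/2))); last first.
    move=> op _; apply: eq_bigr => on _.
    by rewrite mul1r (rankE _ _ _ _ _ k0 km d0) (rankE _ _ _ _ _ k0 km d0) wv.
  by apply: (@Eprod R _ _ _ (B k) (B k)); apply: Ew1.
rewrite !PrWE //; last by apply: leq_trans hm.
have D : forall p, \sum_o sample_weight p nu o * B 1%N o - \sum_o sample_weight p nu o * B 2%N o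
   = (rho' p nu * (1 - rho' p nu) ^+ m.-1) *+ m.
  move=> p; rewrite -sumrB -Ecnt1; apply: eq_bigr => o _.
  by rewrite /B mulrBr.
have a0 : 1 - rho' rho nu != 0.
  rewrite /rho'; apply/lt0r_neq0; nra.
have GE : G_par m rho q nu = (rho' q nu * (1 - rho' q nu) ^+ m.-1) *+ m.
  rewrite /G_par /gamma_par /a_par divfK // -mulr_natl; ring.
have AE : A_par m rho nu = (rho' rho nu * (1 - rho' rho nu) ^+ m.-1) *+ m.
  rewrite /A_par /a_par -mulr_natl; ring.
rewrite GE AE -(D rho) -(D q); ring.
Qed.
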